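(* Let $(M,d)$ be a pointed metric space, let $\gamma\in(0,1]$, let $A\subseteq\widetilde M$, and let $u,v\in M$ with $u\ne v$. Then $A\cup\{(u,v)\}$ is $\gamma$-cyclically monotonic if and only if there exists $f\in B_{\mathrm{Lip}_0(M)}$ such that $f(m_{x,y})\ge\gamma$ for all $(x,y)\in A$, and $f(y)-f(x)+\gamma d(u,v)\le d(x,u)+d(y,v)$ for all $x,y\in\pi(A)$.
   Context: $M$ has base point $0$; $\mathrm{Lip}_0(M)$ is the real Banach space of Lipschitz $f\colon M\to\mathbb R$ with $f(0)=0$, normed by the best Lipschitz constant, with unit ball $B_{\mathrm{Lip}_0(M)}$. $\widetilde M=\{(x,y)\in M\times M:x\ne y\}$ and $f(m_{x,y})=(f(x)-f(y))/d(x,y)$. For $A\subseteq\widetilde M$, $\pi(A)=\{x\in M:\exists y\in M,\ (x,y)\in A\text{ or }(y,x)\in A\}$. For $\gamma\in(0,1]$, $A\subseteq\widetilde M$ is $\gamma$-cyclically monotonic if for every finite sequence $(x_1,y_1),\dots,(x_n,y_n)\in A$, with $y_{n+1}=y_1$, $\sum_{i=1}^n\min\{d(x_i,y_{i+1})-\gamma d(x_i,y_i),\,d(y_i,y_{i+1})\}\ge0$. *)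

(* Defs.v *)
From Stdlib Require Import Reals List.
Open Scope R_scope.

(* A pointed metric space (M, d) with base point [base] (the point 0). *)
Record PointedMetricSpace := {
  pt :> Type;
  mdist : pt -> pt -> R;
  base : pt;
  dist_nonneg : forall x y, 0 <= mdist x y;
  dist_eq0 : forall x y, mdist x y = 0 <-> x = y;
  dist_sym : forall x y, mdist x y = mdist y x;
  dist_tri : forall x y z, mdist x z <= mdist x y + mdist y z
}.

Section Defs.
Variable M : PointedMetricSpace.

Definition pairset := (pt M * pt M)%type -> Prop.

Definition subset_tilde (A : pairset) : Prop :=
  forall p, A p -> fst p <> snd p.

Definition in_Lip0_ball (f : pt M -> R) : Prop :=
  f (base M) = 0 /\ forall x y, Rabs (f x - f y) <= mdist M x y.

Definition mol (f : pt M -> R) (x y : pt M) : R :=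
  (f x - f y) / mdist M x y.

Definition proj (A : pairset) (x : pt M) : Prop :=
  exists y, A (x, y) \/ A (y, x).

Definition cm_term (gamma : R) (x y ynext : pt M) : R :=
  Rmin (mdist M x ynext - gamma * mdist M x y) (mdist M y ynext).

(* cyc_aux gamma y1 l: sum of the summands over l, where the last element's
   successor y is y1 (i.e. y_{n+1} = y_1). *)
Fixpoint cyc_aux (gamma : R) (y1 : pt M) (l : list (pt M * pt M)) : R :=
  match l with
  | nil => 0
  | (x, y) :: rest =>
      let ynext := match rest with nil => y1 | (_, y') :: _ => y' end in
      cm_term gamma x y ynext + cyc_aux gamma y1 rest
  end.

Definition cyc_sum (gamma : R) (l : list (pt M * pt M)) : R :=
  match l with
  | nil => 0
  | (x, y) :: _ => cyc_aux gamma y l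
  end.

Definition gamma_cyc_mon (gamma : R) (A : pairset) : Prop :=
  forall l : list (pt M * pt M),
    (forall p, In p l -> A p) -> 0 <= cyc_sum gamma l.

Definition add_pair (A : pairset) (u v : pt M) : pairset :=
  fun p => A p \/ p = (u, v).

End Defs.

(* Main.v *)
Require Import Defs.
From Stdlib Require Import Reals List.
From Stdlib Require Import Lra Classical ClassicalEpsilon.
Open Scope R_scope.

Fixpoint chainC (M : PointedMetricSpace) (g : R) (o p : pt M)
  (L : list (pt M * pt M)) : R :=
  match L with
  | nil => mdist M p o
  | (x, y) :: rest => mdist M p y - g * mdist M x y + chainC M g o x rest
  end.

Definition hy (M : PointedMetricSpace) (y1 : pt M) (L : list (pt M * pt M)) : pt M :=
  match L with nil => y1 | (_, y') :: _ => y' end.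

Lemma dist_self (M : PointedMetricSpace) (x : pt M) : mdist M x x = 0.
Proof. apply (proj2 (Defs.dist_eq0 M x x)); reflexivity. Qed.

Lemma key (M : PointedMetricSpace) g o L y1 p :
  chainC M g o p L + mdist M o y1 >= mdist M p (hy M y1 L) + cyc_aux M g y1 L.
Proof.
  revert p; induction L as [|[x y] rest IH]; intro p; simpl.
  - pose proof (Defs.dist_tri M p o y1). lra.
  - specialize (IH x).
    assert (cm_term M g x y (hy M y1 rest) <= mdist M x (hy M y1 rest) - g * mdist M x y)
      by (unfold cm_term; apply Rmin_l).
    unfold hy in *. lra.
Qed.

Lemma chain_lb (M : PointedMetricSpace) g P o p L :
  (forall q, In q L -> P q) -> gamma_cyc_mon M g P ->
  - mdist M o p <= chainC M g o p L.
Proof.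
  intros HL Hcm. destruct L as [|[x y] rest].
  - simpl. pose proof (Defs.dist_nonneg M p o). pose proof (Defs.dist_nonneg M o p). lra.
  - pose proof (key M g o ((x, y) :: rest) y p) as K.
    pose proof (Hcm _ HL) as C. unfold cyc_sum in C. simpl hy in K.
    pose proof (Defs.dist_tri M o p y). lra.
Qed.

Lemma chain_lip (M : PointedMetricSpace) g o p q L :
  chainC M g o p L <= mdist M p q + chainC M g o q L.
Proof.
  destruct L as [|[x y] rest]; simpl.
  - pose proof (Defs.dist_tri M p q o). lra.
  - pose proof (Defs.dist_tri M p q y). lra.
Qed.

Lemma chain_pair (M : PointedMetricSpace) g o x y L :
  chainC M g o y ((x, y) :: L) = - g * mdist M x y + chainC M g o x L.
Proof. simpl. rewrite dist_self. ring. Qed.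

Lemma tele (M : PointedMetricSpace) g (P : pairset M) (phi : pt M * pt M -> R) :
  (forall p q, P p -> P q -> cm_term M g (fst p) (snd p) (snd q) >= phi p - phi q) ->
  forall L, (forall p, In p L -> P p) -> forall q1, P q1 -> forall p, P p ->
  cyc_aux M g (snd q1) (p :: L) >= phi p - phi q1.
Proof.
  intros H L. induction L as [|p' L IH]; intros HL q1 Hq1 p Hp; destruct p as [x y].
  - simpl. pose proof (H (x, y) q1 Hp Hq1). simpl in *. lra.
  - destruct p' as [x' y'].
    assert (Hp' : P (x', y')) by (apply HL; left; reflexivity).
    assert (HL' : forall p, In p L -> P p) by (intros; apply HL; right; assumption).
    pose proof (IH HL' q1 Hq1 (x', y') Hp').
    pose proof (H (x, y) (x', y') Hp Hp'). simpl in *. lra.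
Qed.

Lemma div_ge (r d g : R) : 0 < d -> r >= g * d -> r / d >= g.
Proof.
  intros Hd Hr. apply Rle_ge. apply (Rmult_le_reg_r d); [lra|].
  unfold Rdiv. rewrite Rmult_assoc, Rinv_l by lra. lra.
Qed.

Lemma div_ge' (r d g : R) : 0 < d -> r / d >= g -> r >= g * d.
Proof.
  intros Hd Hr. replace r with (r / d * d) by (field; lra).
  apply Rle_ge. apply Rmult_le_compat_r; lra.
Qed.

Lemma dpos (M : PointedMetricSpace) (x y : pt M) : x <> y -> 0 < mdist M x y.
Proof.
  intro H. pose proof (Defs.dist_nonneg M x y).
  destruct (Req_dec (mdist M x y) 0) as [E|E].
  - exfalso. apply H. apply (proj1 (Defs.dist_eq0 M x y)). exact E.
  - lra.
Qed.

Theorem lemma3p3 (M : PointedMetricSpace) (gamma : R) (A : pairset M)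
  (u v : pt M) :
  0 < gamma <= 1 ->
  subset_tilde M A ->
  u <> v ->
  (gamma_cyc_mon M gamma (add_pair M A u v) <->
   exists f : pt M -> R,
     in_Lip0_ball M f /\
     (forall x y, A (x, y) -> mol M f x y >= gamma) /\
     (forall x y, proj M A x -> proj M A y ->
        f y - f x + gamma * mdist M u v <= mdist M x u + mdist M y v)).
Proof.
  intros Hg Hsub Huv. split.
  - intro Hcm.
    set (P := add_pair M A u v).
    set (o := base M).
    set (E := fun p r => exists L, (forall q, In q L -> P q) /\ r = - chainC M gamma o p L).
    assert (X : forall p, {m : R | is_lub (E p) m}).
    { intro p. apply completeness.
      - exists (mdist M o p). intros r [L [HL ->]].
        pose proof (chain_lb M gamma P o p L HL Hcm). lra.
      - exists (- chainC M gamma o p nil). exists nil. split; [intros q []|reflexivity]. }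
    set (m := fun p => proj1_sig (X p)).
    assert (F1 : forall p L, (forall q, In q L -> P q) -> - chainC M gamma o p L <= m p).
    { intros p L HL. destruct (proj2_sig (X p)) as [Hub _]. unfold m.
      apply Hub. exists L. split; auto. }
    assert (F2 : forall p q, m q <= m p + mdist M p q).
    { intros p q. destruct (proj2_sig (X q)) as [_ Hl]. unfold m at 1.
      apply Hl. intros r [L [HL ->]].
      pose proof (F1 p L HL). pose proof (chain_lip M gamma o p q L). lra. }
    assert (F3 : forall x y, P (x, y) -> m x <= m y - gamma * mdist M x y).
    { intros x y Hxy. destruct (proj2_sig (X x)) as [_ Hl]. unfold m at 1.
      apply Hl. intros r [L [HL ->]].
      assert (HL' : forall q, In q ((x, y) :: L) -> P q).
      { intros q [<-|Hq]; auto. }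
      pose proof (F1 y _ HL'). rewrite chain_pair in H. lra. }
    exists (fun p => m o - m p). split; [|split].
    + split.
      * cbv beta. change (base M) with o. ring.
      * intros x y. pose proof (F2 x y). pose proof (F2 y x).
        pose proof (Defs.dist_sym M x y).
        unfold Rabs; destruct (Rcase_abs _); lra.
    + intros x y Hxy. unfold mol. apply div_ge.
      * apply dpos. apply (Hsub (x, y) Hxy).
      * pose proof (F3 x y (or_introl Hxy)). lra.
    + intros x y _ _.
      pose proof (F3 u v (or_intror eq_refl)).
      pose proof (F2 u x). pose proof (F2 y v).
      pose proof (Defs.dist_sym M u x). lra.
  - intros [f [[Hf0 Hlip] [Hmol Hcross]]] l Hl.
    assert (Lip : forall x y, f x - f y <= mdist M x y).
    { intros x y. pose proof (Hlip x y). pose proof (Rle_abs (f x - f y)). lra. }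
    assert (HA : forall x y, A (x, y) -> f x - f y >= gamma * mdist M x y).
    { intros x y H. apply div_ge'; [apply dpos; apply (Hsub _ H)|]. apply Hmol; auto. }
    assert (Ha : exists a, forall z, proj M A z ->
               f z - mdist M z v <= a /\ a <= f z + mdist M v z /\
               a <= f z + mdist M u z - gamma * mdist M u v).
    { destruct (classic (exists z, proj M A z)) as [[z0 Hz0]|Hn].
      - set (E := fun r => exists z, proj M A z /\ r = f z - mdist M z v).
        assert (Ub1 : forall w, is_upper_bound E (f w + mdist M v w)).
        { intros w r [z [_ ->]]. pose proof (Lip z w). pose proof (Defs.dist_tri M z v w). lra. }
        assert (Ub2 : forall w, proj M A w ->
                   is_upper_bound E (f w + mdist M u w - gamma * mdist M u v)).
        { intros w Hw r [z [Hz ->]]. pose proof (Hcross w z Hw Hz).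
          pose proof (Defs.dist_sym M w u). lra. }
        destruct (completeness E) as [a [Hub Hl']].
        + exists (f z0 + mdist M v z0). apply Ub1.
        + exists (f z0 - mdist M z0 v). exists z0. auto.
        + exists a. intros z Hz. split; [|split].
          * apply Hub. exists z. auto.
          * apply Hl'. apply Ub1.
          * apply Hl'. apply Ub2. exact Hz.
      - exists 0. intros z Hz. exfalso. apply Hn. exists z. exact Hz. }
    destruct Ha as [a Ha].
    set (phi := fun p : pt M * pt M =>
                  if excluded_middle_informative (p = (u, v)) then a else f (snd p)).
    assert (Hpair : forall p q, add_pair M A u v p -> add_pair M A u v q ->
              cm_term M gamma (fst p) (snd p) (snd q) >= phi p - phi q).
    { intros [x y] [x' y'] Hp Hq. unfold phi, cm_term; simpl.
      destruct (excluded_middle_informative ((x, y) = (u, v))) as [E1|E1];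
      destruct (excluded_middle_informative ((x', y') = (u, v))) as [E2|E2].
      - injection E1 as -> ->. injection E2 as -> ->.
        rewrite dist_self. pose proof (Defs.dist_nonneg M u v).
        unfold Rmin; destruct (Rle_dec _ _); nra.
      - injection E1 as -> ->.
        destruct Hq as [Hq|Hq]; [|contradiction].
        assert (Hy' : proj M A y') by (exists x'; right; exact Hq).
        destruct (Ha y' Hy') as [_ [H1 H2]].
        unfold Rmin; destruct (Rle_dec _ _); lra.
      - injection E2 as -> ->.
        destruct Hp as [Hp|Hp]; [|contradiction].
        assert (Hx : proj M A x) by (exists y; left; exact Hp).
        assert (Hy : proj M A y) by (exists x; right; exact Hp).
        destruct (Ha x Hx) as [H1 _]. destruct (Ha y Hy) as [H2 _].
        pose proof (HA x y Hp).
        unfold Rmin; destruct (Rle_dec _ _); lra.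
      - destruct Hp as [Hp|Hp]; [|contradiction].
        pose proof (HA x y Hp). pose proof (Lip x y'). pose proof (Lip y y').
        unfold Rmin; destruct (Rle_dec _ _); lra. }
    destruct l as [|[x y] rest].
    + simpl. lra.
    + unfold cyc_sum.
      assert (H1 : add_pair M A u v (x, y)) by (apply Hl; left; reflexivity).
      pose proof (tele M gamma _ phi Hpair rest
                    (fun p Hp => Hl p (or_intror Hp)) (x, y) H1 (x, y) H1).
      simpl snd in H. lra.
Qed.
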